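(* Let $p,q\in\mathbb N$, let $d=\gcd(p,q)$, and write $p=p'\cdot d$, $q=q'\cdot d$. Suppose $p\ge q'>1$ and $q\ge p'>1$. Then the number $m=p'\cdot q'\cdot d=p\cdot q'=q\cdot p'$ is antipalindromic both in base $p+1$ and in base $q+1$.
   Context: For an integer $b\ge 2$, every natural number $x$ has a unique base-$b$ expansion $x=a_\ell b^\ell+\dots+a_1b+a_0$ with $a_0,\dots,a_\ell\in\{0,1,\dots,b-1\}$ and $a_\ell\neq 0$. The number $x$ is antipalindromic in base $b$ if $a_j=b-1-a_{\ell-j}$ for all $j\in\{0,1,\dots,\ell\}$. *)

(* Defs.v *)
From mathcomp Require Import all_boot.
Set Implicit Arguments. Unset Strict Implicit. Unset Printing Implicit Defensive.

(* Base-b digits of x, least significant first: [:: a_0; a_1; ...; a_l],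
   with a_l <> 0 (empty list for x = 0). Fuel x suffices since b >= 2. *)
Fixpoint digits_aux (fuel b x : nat) : seq nat :=
  match fuel with
  | 0 => [::]
  | fuel'.+1 => if x == 0 then [::] else (x %% b) :: digits_aux fuel' b (x %/ b)
  end.

Definition digits (b x : nat) : seq nat := digits_aux x b x.

Definition antipalindromic (b x : nat) : Prop :=
  let s := digits b x in
  forall j, j < size s -> nth 0 s j = b - 1 - nth 0 s ((size s).-1 - j).

(* Main.v *)
Require Import Defs.
From mathcomp Require Import all_boot.
From mathcomp Require Import zify.

Lemma digits2 n b a0 a1 : 0 < a1 < b -> a0 < b ->
  digits_aux n.+2 b (a1 * b + a0) = [:: a0; a1].
Proof.
move=> /andP[a1p a1b] a0b.
have bp : 0 < b by lia.
rewrite /= (_ : (a1 * b + a0 == 0) = false); last by apply/negbTE; lia.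
rewrite modnMDl divnMDl // modn_small // divn_small // addn0.
rewrite (_ : (a1 == 0) = false); last by apply/negbTE; lia.
rewrite modn_small // divn_small //.
by case: n.
Qed.

Lemma anti_key c k : 1 < k -> k <= c -> antipalindromic c.+1 (k * c).
Proof.
move=> k1 kc.
have E : k * c = (k - 1) * c.+1 + (c.+1 - k) by nia.
rewrite /antipalindromic /digits E.
set x := (k - 1) * c.+1 + (c.+1 - k).
have Hx : x = x.-2.+2 by rewrite /x; nia.
have D : digits_aux x c.+1 x = [:: c.+1 - k; k - 1].
  rewrite {1}Hx /x digits2 //; [apply/andP; split; lia | lia].
rewrite D.
by move=> j /=; case: j => [|[|j]] //= _; lia.
Qed.

Theorem mainTheorem16 (p q : nat) :
  let d := gcdn p q in
  let p' := p %/ d in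
  let q' := q %/ d in
  q' <= p -> 1 < q' -> p' <= q -> 1 < p' ->
  p' * q' * d = p * q' /\ p * q' = q * p' /\
  antipalindromic p.+1 (p' * q' * d) /\ antipalindromic q.+1 (p' * q' * d).
Proof.
move=> d p' q' h1 h2 h3 h4.
have Ep : p' * d = p by rewrite /p' divnK // dvdn_gcdl.
have Eq : q' * d = q by rewrite /q' divnK // dvdn_gcdr.
have A : p' * q' * d = p * q' by rewrite -Ep; nia.
have B : p * q' = q * p' by rewrite -Ep -Eq; lia.
split; first exact A. split; first exact B.
rewrite A; split; first by rewrite mulnC; apply: anti_key.
by rewrite B mulnC; apply: anti_key.
Qed.
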